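(* Let $k$ be a positive integer. For any graph $H=(W,F)$ there exists a graph $G$ containing $W$ as a subset of its vertex set such that the induced subgraph $G[W]$ is isomorphic to $H$ and $W$ is a minimum $k$-PVC of $G$.
   Context: All graphs are finite and simple. For a graph $G$ and a positive integer $k$, a $k$-path vertex cover ($k$-PVC) of $G$ is a set $S$ of vertices such that every path on $k$ vertices in $G$ contains at least one vertex of $S$. $\psi_k(G)$ denotes the minimum cardinality of a $k$-PVC of $G$, and a minimum $k$-PVC is a $k$-PVC of cardinality $\psi_k(G)$. *)

(* Defs.v *)
From mathcomp Require Import all_boot.
Set Implicit Arguments. Unset Strict Implicit. Unset Printing Implicit Defensive.

Definition simple_graph (T : finType) (e : rel T) : Prop :=
  symmetric e /\ irreflexive e.

Definition is_kpath (T : finType) (e : rel T) (k : nat) (p : seq T) : bool :=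
  [&& size p == k, uniq p &
      match p with [::] => true | x :: q => path e x q end].

Definition kPVC (T : finType) (e : rel T) (k : nat) (S : {set T}) : Prop :=
  forall p : seq T, is_kpath e k p -> has (fun v => v \in S) p.

Definition min_kPVC (T : finType) (e : rel T) (k : nat) (S : {set T}) : Prop :=
  kPVC e k S /\ forall S' : {set T}, kPVC e k S' -> #|S| <= #|S'|.

(* Main.v *)
Require Import Defs.
From mathcomp Require Import all_boot.
From mathcomp Require Import zify.

Section S.
Variables (n : nat) (W : finType) (F : rel W).
Definition V := (W * 'I_n.+1)%type.
Definition E : rel V := fun u v =>
  if (val u.2 == 0) && (val v.2 == 0) then F u.1 v.1
  else (u.1 == v.1) && (((val u.2).+1 == val v.2) || ((val v.2).+1 == val u.2)).

Lemma path_same (x : V) q : path E x q -> all (fun v : V => val v.2 != 0) (x :: q) ->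
  all (fun v : V => v.1 == x.1) q.
Proof.
elim: q x => //= y q IH x /andP[exy pq] /and3P[x0 y0 aq].
have ex : y.1 == x.1.
  by move: exy; rewrite /E (negbTE x0) /= eq_sym => /andP[].
rewrite ex /=.
have := IH y pq; rewrite y0 aq => /(_ isT).
by move/allP=> H; apply/allP=> v vq; rewrite (eqP (H v vq)).
Qed.

Definition pw (w : W) : seq V := [seq (w, inord i) | i <- iota 0 n.+1].

Lemma pw_kpath w : is_kpath E n.+1 (pw w).
Proof.
apply/and3P; split.
- by rewrite size_map size_iota.
- rewrite map_inj_in_uniq ?iota_uniq // => i j; rewrite !mem_iota /= => Hi Hj [].
  move/(congr1 (@nat_of_ord n.+1)); rewrite !inordK //; lia.
- rewrite /pw /=. change (path E (w, inord 0) [seq (w, inord i) | i <- iota 1 n] : Prop). apply/(pathP (w, ord0)) => i; rewrite size_map size_iota => Hi.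

  rewrite (nth_map 0) ?size_iota; last by lia.
  change ((w, inord 0) :: ?s) with [seq (w, inord i0 : 'I_n.+1) | i0 <- iota 0 n.+1].
  rewrite (nth_map 0) ?size_iota; last by lia.
  rewrite !nth_iota; try lia.
  rewrite /E /= !inordK; try lia.
  case: ifP => [/andP[_ /eqP]|_]; first lia.
  rewrite eqxx /=. apply/orP; left. apply/eqP. lia.
Qed.
End S.

Theorem mainTheorem4 (k : nat) (Hk : 0 < k) (W : finType) (F : rel W)
  (HF : simple_graph F) :
  exists (V : finType) (E : rel V) (f : W -> V),
    [/\ simple_graph E,
        injective f,
        (forall x y : W, E (f x) (f y) = F x y) &
        min_kPVC E k (f @: [set: W])].
Proof.
case: k Hk => // n _.
case: HF => Fs Fi.
exists (V n W), (@E n W F), (fun w => (w, ord0)).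
split.
- split.
  + move=> [a i] [b j]; rewrite /E /=.
    case: ifP => [/andP[/eqP -> /eqP ->]|] /=; first by rewrite Fs.
    rewrite andbC. case: ifP => //= _.
    by rewrite eq_sym orbC.
  + move=> [a i]; rewrite /E /=; case: ifP => _; first exact: Fi.
    rewrite eqxx /=; apply/negbTE; apply/norP; split; apply/eqP; lia.
- by move=> a b [].
- by move=> x y; rewrite /E /=.
split.
- move=> p /and3P[/eqP sp up pp].
  apply/negPn/negP; rewrite -all_predC => Hall.
  case: p sp up pp Hall => // x q sp up pp Hall.
  have Hnz : all (fun v : V n W => val v.2 != 0) (x :: q).
    apply/allP=> v vp; have := allP Hall v vp => /=.
    apply: contra => /eqP v0; apply/imsetP; exists v.1 => //.
    by case: v {vp} v0 => a i /= v0; congr pair; apply/val_inj.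
  have Hsame := @path_same n W F x q pp Hnz.
  have Hun : uniq [seq v.2 | v <- x :: q].
    rewrite map_inj_in_uniq // => u v up1 vp1 e2.
    have e1 : u.1 = v.1.
      have hu : u.1 = x.1.
        by move: up1; rewrite inE => /orP[/eqP -> //| /(allP Hsame) /eqP].
      have hv : v.1 = x.1.
        by move: vp1; rewrite inE => /orP[/eqP -> //| /(allP Hsame) /eqP].
      by rewrite hu hv.
    by case: u v {up1 vp1} e1 e2 => a i [b j] /= -> ->.
  have Hsub : {subset [seq v.2 | v <- x :: q] <= [pred i : 'I_n.+1 | val i != 0]}.
    move=> i /mapP[v vp ->]; exact: (allP Hnz v vp).
  have : #|[seq v.2 | v <- x :: q]| <= #|[pred i : 'I_n.+1 | val i != 0]| by apply: subset_leq_card; apply/subsetP.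
  rewrite (card_uniqP Hun).
  rewrite size_map sp.
  have -> : #|[pred i : 'I_n.+1 | val i != 0]| = n.
    have := cardC [pred i : 'I_n.+1 | val i != 0]; rewrite card_ord.
    have -> : #|[predC [pred i : 'I_n.+1 | val i != 0]]| = 1.
      rewrite -(card1 (@ord0 n)); apply: eq_card => i; rewrite !inE negbK.
      apply/idP/idP => [H|/eqP ->] //; apply/eqP/val_inj; exact/eqP.
    by rewrite addn1 => -[].
  by rewrite ltnn.
- move=> S' HS.
  rewrite card_imset; last by move=> a b [].
  have Hg : forall w : W, exists i : 'I_n.+1, (w, i) \in S'.
    move=> w; have /hasP[v vp vS] := HS _ (@pw_kpath n W F w).
    move: vp => /mapP[j _ ev]; exists (inord j); by rewrite -ev.
  pose g w := (w, xchoose (Hg w)).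
  have gin : forall w, g w \in S' by move=> w; rewrite /g; exact: (xchooseP (Hg w)).
  have ginj : injective g by move=> a b [].
  rewrite -(card_imset [set: W] ginj).
  apply: subset_leq_card; apply/subsetP => v /imsetP[w _ ->]; exact: gin.
Qed.
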